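(* Let $p\ge 2$, let $\alpha_1,\dots,\alpha_p,c$ be real numbers, and let $B$ be the $p\times p$ symmetric matrix with diagonal entries $\alpha_1,\dots,\alpha_p$ and all off-diagonal entries equal to $c$. For $k=1,\dots,p$ let $d_k(c)$ denote the $k$-th leading principal minor of $B$ (determinant of the upper-left $k\times k$ submatrix). Then $d_k$ is a polynomial in $c$ of degree $k$ given by $$d_k(c)=\prod_{m=1}^k(\alpha_m-c)+c\sum_{m=1}^k\ \prod_{\substack{1\le \ell\le k\\ \ell\ne m}}(\alpha_\ell-c).$$ Assume furthermore that $0<\alpha_1\le\alpha_2\le\dots\le\alpha_p<1$. Then for each $k\in\{2,\dots,p\}$ all roots of $d_k$ are real; denoting them $r_{k,1}\le r_{k,2}\le\dots\le r_{k,k}$ (with multiplicity), they interlace with the $\alpha$'s: $$r_{k,1}<0<\alpha_1\le r_{k,2}\le\alpha_2\le\dots\le r_{k,k}\le\alpha_k<1,$$ and moreover $$-\sqrt{\alpha_1\alpha_2}=r_{2,1}\le r_{3,1}\le\dots\le r_{k,1}<0<r_{k,2}\le\dots\le r_{3,2}\le r_{2,2}=\sqrt{\alpha_1\alpha_2}.$$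
   Context: Since reordering the $\alpha$'s (with the corresponding simultaneous permutation of rows and columns) does not change $\det B=d_p(c)$, the roots $r_{p,1}$, $r_{p,2}$ of $d_p$ are the same for any ordering; the sorted order $\alpha_1\le\dots\le\alpha_p$ is assumed for the statements about the leading minors $d_k$, $k<p$. *)

(* Defs.v *)
From HB Require Import structures.
From mathcomp Require Import all_boot all_order all_algebra.
Set Implicit Arguments. Unset Strict Implicit. Unset Printing Implicit Defensive.
Import Order.TTheory GRing.Theory Num.Theory.
Local Open Scope ring_scope.

(* The p x p matrix B with diagonal alpha_1,...,alpha_p (1-based: row i : 'I_p
   carries alpha (i+1)) and all off-diagonal entries equal to c. *)
Definition Bmat (R : nzRingType) (p : nat) (alpha : nat -> R) (c : R) : 'M[R]_p :=
  \matrix_(i < p, j < p) (if i == j then alpha i.+1 else c).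

Definition lead_minor (R : comNzRingType) (p : nat) (A : 'M[R]_p) (k : nat)
  (hk : (k <= p)%N) : R :=
  \det (mxsub (widen_ord hk) (widen_ord hk) A).

Definition dpoly (R : comNzRingType) (p : nat) (alpha : nat -> R) (k : nat)
  (hk : (k <= p)%N) : {poly R} :=
  lead_minor (Bmat p (fun i => (alpha i)%:P) 'X) hk.

Definition dformula (R : comNzRingType) (alpha : nat -> R) (k : nat) : {poly R} :=
  \prod_(1 <= m < k.+1) ((alpha m)%:P - 'X)
  + 'X * \sum_(1 <= m < k.+1) \prod_(1 <= l < k.+1 | l != m) ((alpha l)%:P - 'X).

(* Main.v *)
Require Import Defs.
From HB Require Import structures.
From mathcomp Require Import all_boot all_order all_algebra.
From mathcomp Require Import ring lra zify.
From Stdlib Require Import ClassicalEpsilon.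
Import Order.TTheory GRing.Theory Num.Theory.
Set Implicit Arguments. Unset Strict Implicit. Unset Printing Implicit Defensive.
Local Open Scope ring_scope.


Definition Pk (R : comNzRingType) (a : nat -> R) (c : R) (k : nat) : R :=
  \prod_(1 <= m < k.+1) (a m - c).
Definition Sk (R : comNzRingType) (a : nat -> R) (c : R) (k : nat) : R :=
  \sum_(1 <= m < k.+1) \prod_(1 <= l < k.+1 | l != m) (a l - c).
Definition Fk (R : comNzRingType) (a : nat -> R) (c : R) (k : nat) : R :=
  Pk a c k + c * Sk a c k.

Lemma Pk_rec (R : comNzRingType) (a : nat -> R) c k :
  Pk a c k.+1 = Pk a c k * (a k.+1 - c).
Proof. by rewrite /Pk big_nat_recr. Qed.

Lemma Sk_rec (R : comNzRingType) (a : nat -> R) c k :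
  Sk a c k.+1 = Sk a c k * (a k.+1 - c) + Pk a c k.
Proof.
rewrite /Sk /Pk big_nat_recr //= mulr_suml /=; congr (_ + _).
  apply: eq_big_nat => m /andP [_ hm].
  rewrite big_mkcond big_nat_recr //= -big_mkcond /=.
  by rewrite (_ : (k.+1 != m) = true) ?mulr1 //; apply/eqP => E; rewrite E ltnn in hm.
rewrite big_mkcond big_nat_recr //= eqxx mulr1 -big_mkcond /=.
rewrite big_nat_cond [RHS]big_nat_cond; apply: eq_bigl => l.
by case: (ltnP l k.+1) => hl; rewrite ?andbF ?andbT //= (ltn_eqF hl) andbT.
Qed.

Lemma Fk_rec (R : comNzRingType) (a : nat -> R) c k :
  Fk a c k.+1 = (a k.+1 - c) * Fk a c k + c * Pk a c k.
Proof. rewrite /Fk Pk_rec Sk_rec; ring. Qed.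

Lemma Fk0 (R : comNzRingType) (a : nat -> R) c : Fk a c 0 = 1.
Proof. by rewrite /Fk /Pk /Sk !big_geq // mulr0 addr0. Qed.

Lemma Bmat_sub (R : comNzRingType) p (a : nat -> R) c k (hk : (k <= p)%N) :
  mxsub (widen_ord hk) (widen_ord hk) (Bmat p a c) = Bmat k a c.
Proof.
apply/matrixP => i j; rewrite !mxE /=.
by have -> : (widen_ord hk i == widen_ord hk j) = (i == j).
Qed.

Lemma det_lastrow1 (R : comNzRingType) (a : nat -> R) c k :
  \det (\matrix_(i < k.+1, j < k.+1)
     (if i == ord_max then 1 else if i == j then a i.+1 else c)) = Pk a c k.
Proof.
set C := \matrix_(i, j) _.
pose C' : 'M[R]_k.+1 := \matrix_(i, j)
   (if i == ord_max then 1 else if i == j then a i.+1 - c else 0).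
pose N : 'M[R]_k.+1 := \matrix_(i, j) (if (i != ord_max) && (j == ord_max) then c else 0).
have EC : C = (1%:M + N) *m C'.
  apply/matrixP => i j; rewrite mulmxDl mul1mx !mxE.
  rewrite (bigD1 ord_max) //= big1 => [|l hl]; last by rewrite !mxE (negbTE hl) andbF mul0r.
  rewrite !mxE eqxx andbT addr0.
  case: (i == ord_max) => /=; first by rewrite mul0r addr0.
  rewrite mulr1; case: (i == j); ring.
rewrite EC det_mulmx.
have -> : \det (1%:M + N) = 1.
  rewrite -det_tr det_trig.
    by rewrite big1 // => i _; rewrite !mxE eqxx /=; case: (i == ord_max); rewrite /= addr0.
  apply/forallP => i; apply/forallP => j; apply/implyP => hij; rewrite !mxE.
  rewrite (_ : (j == i) = false); last by apply/negbTE; rewrite neq_ltn hij orbT.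
  case: (i =P ord_max) => [E|_] /=; last by rewrite andbF addr0.
  by move: hij; rewrite E /= ltnNge -ltnS (ltn_ord j).
rewrite mul1r det_trig.
  rewrite big_ord_recr /= !mxE eqxx mulr1 /Pk big_add1 /= big_mkord.
  apply: eq_bigr => i _; rewrite !mxE eqxx.
  by rewrite (_ : (widen_ord (leqnSn k) i == ord_max) = false) //; apply/negbTE; rewrite neq_ltn /= ltn_ord.
apply/forallP => i; apply/forallP => j; apply/implyP => hij; rewrite !mxE.
case: (i =P ord_max) => [E|_].
  by move: hij; rewrite E /= ltnNge -ltnS (ltn_ord j).
by rewrite (_ : (i == j) = false) //; apply/negbTE; rewrite neq_ltn hij.
Qed.

Lemma det_Bmat (R : comNzRingType) (a : nat -> R) c k :
  \det (Bmat k a c) = Fk a c k.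
Proof.
elim: k => [|k IH]; first by rewrite det_mx00 Fk0.
pose B : 'M[R]_k.+1 := \matrix_(i, j)
   (if i == ord_max then (i == j)%:R else Bmat k.+1 a c i j).
pose C : 'M[R]_k.+1 := \matrix_(i, j)
   (if i == ord_max then 1 else Bmat k.+1 a c i j).
rewrite (@determinant_multilinear _ _ _ B C ord_max (a k.+1 - c) c); first last.
- apply/matrixP => i j; rewrite !mxE.
  by have -> : (lift ord_max i == ord_max) = false by apply/negbTE; rewrite eq_sym neq_lift.
- apply/matrixP => i j; rewrite !mxE.
  by have -> : (lift ord_max i == ord_max) = false by apply/negbTE; rewrite eq_sym neq_lift.
- apply/matrixP => i j; rewrite !mxE !eqxx eq_sym.
  case: (j == ord_max); rewrite /=; ring.
rewrite Fk_rec; congr (_ * _ + _ * _).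
  rewrite (expand_det_row _ ord_max) (bigD1 ord_max) //= big1 => [|j hj]; last first.
    by rewrite !mxE eqxx eq_sym (negbTE hj) mul0r.
  rewrite !mxE !eqxx mul1r addr0 /cofactor.
  rewrite -signr_odd addnn odd_double expr0 mul1r -IH; congr (\det _).
  apply/matrixP => i j; rewrite !mxE.
  have -> : (lift ord_max i == ord_max) = false by apply/negbTE; rewrite eq_sym neq_lift.
  by rewrite (inj_eq (@lift_inj _ ord_max)) lift_max.
rewrite -(det_lastrow1 a c k); congr (\det _).
apply/matrixP => i j; rewrite !mxE.
by case: (i =P ord_max).
Qed.


Lemma dformula_Fk (R : comNzRingType) (alpha : nat -> R) k :
  dformula alpha k = Fk (fun i => (alpha i)%:P) 'X k.
Proof. by []. Qed.

Lemma horner_Fk (R : comNzRingType) (alpha : nat -> R) k x :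
  (Fk (fun i => (alpha i)%:P) 'X k).[x] = Fk alpha x k.
Proof.
rewrite /Fk /Pk /Sk hornerD hornerM hornerX horner_prod horner_sum.
congr (_ + _ * _).
  by apply: eq_bigr => i _; rewrite !hornerE.
apply: eq_bigr => i _; rewrite horner_prod.
by apply: eq_bigr => j _; rewrite !hornerE.
Qed.

Lemma dpoly_eq (R : comNzRingType) p (alpha : nat -> R) k (hk : (k <= p)%N) :
  dpoly alpha hk = dformula alpha k.
Proof. by rewrite /dpoly /lead_minor Bmat_sub det_Bmat. Qed.

Lemma dpoly_horner (R : comNzRingType) p (alpha : nat -> R) k (hk : (k <= p)%N) c :
  (dpoly alpha hk).[c] = lead_minor (Bmat p alpha c) hk.
Proof. by rewrite dpoly_eq dformula_Fk horner_Fk /lead_minor Bmat_sub det_Bmat. Qed.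

Lemma prodQ (R : comNzRingType) (a : nat -> R) (s : seq nat) (P : pred nat) :
  (size (\prod_(l <- s | P l) ((a l)%:P - 'X))%R <= (count P s).+1)%N /\
  (\prod_(l <- s | P l) ((a l)%:P - 'X))`_(count P s) = (-1) ^+ (count P s).
Proof.
elim: s => [|x s [IH1 IH2]]; first by rewrite big_nil size_poly1 coef1.
rewrite big_cons /=; case: (P x) => //=.
set Q := \prod_(_ <- _ | _) _.
split.
  apply: (leq_trans (size_polyMleq _ _)).
  by rewrite -opprB size_polyN size_XsubC /=.
rewrite mulrBl coefB coefCM coefXM /=.
move/leq_sizeP: IH1 => ->; last by [].
by rewrite IH2 mulr0 sub0r exprS mulN1r.
Qed.

Lemma count_neq_iota m k : (1 <= m <= k)%N ->
  count (fun l => l != m) (index_iota 1 k.+1) = k.-1.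
Proof.
move=> hm; rewrite /index_iota subn1 /=.
have := count_predC (pred1 m) (iota 1 k).
rewrite size_iota count_uniq_mem ?iota_uniq // mem_iota.
move=> E; rewrite -[in RHS]E add1n ltnS hm. by [].
Qed.

Lemma size_dformula (R : numDomainType) (alpha : nat -> R) k : (2 <= k)%N ->
  size (dformula alpha k) = k.+1.
Proof.
move=> hk.
have cP : count predT (index_iota 1 k.+1) = k by rewrite count_predT size_iota subn1.
have [P1 P2] := prodQ (fun i => alpha i) (index_iota 1 k.+1) predT.
rewrite cP in P1 P2.
pose S := \sum_(1 <= m < k.+1) \prod_(1 <= l < k.+1 | l != m) ((alpha l)%:P - 'X : {poly R}).
have Sb : (size S <= k)%N.
  apply/leq_sizeP => j hj; rewrite /S coef_sum big1_seq //= => m; rewrite mem_index_iota => hm.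
  have [Q1 _] := prodQ (fun i => alpha i) (index_iota 1 k.+1) (fun l => l != m).
  rewrite count_neq_iota // in Q1.
  by apply/leq_sizeP: hj; apply: (leq_trans Q1); rewrite prednK // (leq_trans _ hk).
have Sk : S`_k.-1 = (-1) ^+ k.-1 *+ k.
  rewrite /S coef_sum (eq_big_nat _ _ (F2 := fun _ => (-1) ^+ k.-1)).
    by rewrite sumr_const_nat subn1.
  move=> m hm; have [_ Q2] := prodQ (fun i => alpha i) (index_iota 1 k.+1) (fun l => l != m).
  by rewrite count_neq_iota // in Q2.
have hb : (size (dformula alpha k) <= k.+1)%N.
  rewrite /dformula -/S; apply: (leq_trans (size_polyD _ _)); rewrite geq_max P1 /=.
  apply: (leq_trans (size_polyMleq _ _)); by rewrite size_polyX.
apply/anti_leq; rewrite hb /= ltnNge; apply/negP => /leq_sizeP /(_ k (leqnn k)).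
rewrite /dformula -/S coefD coefXM P2 -(prednK (ltnW hk)) /= Sk.
rewrite exprS mulN1r => /eqP.
have -> : - (-1) ^+ k.-1 + (-1) ^+ k.-1 *+ k = ((-1) ^+ k.-1 : R) * (k.-1)%:R.
  by rewrite -[X in _ *+ X](prednK (ltnW hk)) mulrS addrA addNr add0r mulr_natr.
rewrite mulf_eq0 signr_eq0 /= pnatr_eq0.
by rewrite -subn1 subn_eq0 leqNgt hk.
Qed.


Lemma prod_split (R : comNzRingType) (a : nat -> R) (s : seq nat) (P : pred nat) (y : R) :
  \prod_(l <- s | P l) ((a l)%:P - 'X) =
  (y%:P - 'X) ^+ (count (fun l => P l && (a l == y)) s) *
  \prod_(l <- s | P l && (a l != y)) ((a l)%:P - 'X).
Proof.
elim: s => [|x s IH]; first by rewrite !big_nil mulr1.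
rewrite !big_cons /=; case: (P x) => /=; last by rewrite IH.
case: (a x =P y) => [->|_] /=; rewrite IH; last by rewrite add0n mulrCA.
by rewrite exprS mulrA.
Qed.

Lemma dvd_prod (R : idomainType) (a : nat -> R) (s : seq nat) (P : pred nat) (y : R) :
  ('X - y%:P) ^+ (count (fun l => P l && (a l == y)) s) %|
  \prod_(l <- s | P l) ((a l)%:P - 'X).
Proof.
rewrite (prod_split a s P y); apply: dvdp_mulr.
rewrite (_ : y%:P - 'X = -1 * ('X - y%:P)); last by rewrite mulN1r opprB.
by rewrite exprMn; apply: dvdp_mull.
Qed.

Lemma prod_divides (R : fieldType) (r : seq R) (P : {poly R}) :
  (forall y, ('X - y%:P) ^+ (count_mem y r) %| P) ->
  \prod_(x <- r) ('X - x%:P) %| P.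
Proof.
elim: r P => [|x s IH] P H; first by rewrite big_nil dvd1p.
have Hx := H x; rewrite /= eqxx add1n exprS in Hx.
have hx : ('X - x%:P) %| P by apply: dvdp_trans Hx; apply: dvdp_mulIl.
rewrite -(divpK hx) big_cons mulrC; apply: dvdp_mul; last exact: dvdpp.
apply: IH => y; case: (y =P x) => [->|/eqP hyx].
  have : ('X - x%:P) ^+ (count_mem x s) * ('X - x%:P) %| (P %/ ('X - x%:P)) * ('X - x%:P).
    by rewrite divpK // -exprSr exprS.
  by rewrite dvdp_mul2r // polyXsubC_eq0.
have hxy : (x == y) = false by rewrite eq_sym (negbTE hyx).
have := H y; rewrite /= hxy add0n.
rewrite -{1}(divpK hx) Gauss_dvdpl //.
apply: coprimep_expl; rewrite coprimep_XsubC rootE !hornerE subr_eq0.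
by rewrite eq_sym.
Qed.

Lemma factor_from_div (R : fieldType) (r : seq R) (P : {poly R}) :
  \prod_(x <- r) ('X - x%:P) %| P -> size P = (size r).+1 ->
  P = lead_coef P *: \prod_(x <- r) ('X - x%:P).
Proof.
move=> hd hs.
have hP : P != 0 by rewrite -size_poly_eq0 hs.
set pr := \prod_(_ <- _) _ in hd *.
have mpr : pr \is monic by apply: monic_prod_XsubC.
have spr : size pr = (size r).+1 by rewrite size_prod_XsubC.
have E := divpK hd.
set q := P %/ pr in E.
have q0 : q != 0 by apply: contraNneq hP => q0; rewrite -E q0 mul0r.
have sq : size q = 1%N.
  have := size_mul q0 (monic_neq0 mpr); rewrite E hs spr.
  by rewrite addnS /= => /eqP; rewrite -{1}[(size r).+1]add1n eqn_add2r => /eqP.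
have Eq : q = (q`_0)%:P by apply: size1_polyC; rewrite sq.
rewrite -E lead_coefM (monicP mpr) mulr1 [in LHS]Eq mul_polyC.
by rewrite [in RHS]Eq lead_coefC.
Qed.

Lemma Sk_deriv (R : comNzRingType) (alpha : nat -> R) k :
  Sk (fun i => (alpha i)%:P) 'X k = - (Pk (fun i => (alpha i)%:P) 'X k)^`().
Proof.
elim: k => [|k IH].
  by rewrite /Sk /Pk !big_geq // derivC oppr0.
rewrite Sk_rec Pk_rec derivM IH derivB derivC derivX; ring.
Qed.


Definition hypA (R : rcfType) p (alpha : nat -> R) :=
  (forall i j, (1 <= i)%N -> (i <= j)%N -> (j <= p)%N -> alpha i <= alpha j) /\
  (forall i, (1 <= i <= p)%N -> 0 < alpha i /\ alpha i < 1).

Lemma F0pos (R : rcfType) p (alpha : nat -> R) k : hypA p alpha -> (k <= p)%N ->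
  0 < Fk alpha 0 k.
Proof.
move=> [_ hb] hk; rewrite /Fk mul0r addr0 /Pk big_seq; apply: prodr_gt0 => i.
rewrite mem_index_iota subr0 => /andP [h1 h2].
by have [] := hb i; rewrite ?h1 ?(leq_trans _ hk).
Qed.

Lemma Fm1neg (R : rcfType) p (alpha : nat -> R) k : hypA p alpha -> (2 <= k <= p)%N ->
  Fk alpha (-1) k < 0.
Proof.
move=> [_ hb] /andP [hk2 hkp].
have hb' : forall i, (1 <= i < k.+1)%N -> 0 < alpha i /\ alpha i < 1.
  by move=> i /andP [h1 h2]; apply: hb; rewrite h1 (leq_trans _ hkp).
set P := Pk alpha (-1) k.
have Ppos : 0 < P.
  rewrite /P /Pk big_seq; apply: prodr_gt0 => i; rewrite mem_index_iota => /hb' [h _].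
  lra.
have key : forall m, (1 <= m < k.+1)%N ->
    P < 2 * \prod_(1 <= l < k.+1 | l != m) (alpha l - (-1)).
  move=> m hm; have [h0 h1] := hb' m hm.
  have E : P = (alpha m - (-1)) * \prod_(1 <= l < k.+1 | l != m) (alpha l - (-1)).
    by rewrite /P /Pk (bigD1_seq m) ?mem_index_iota ?iota_uniq.
  have Qpos : 0 < \prod_(1 <= l < k.+1 | l != m) (alpha l - (-1)).
    rewrite big_seq_cond; apply: prodr_gt0 => i /andP [].
    by rewrite mem_index_iota => /hb' [h _] _; lra.
  rewrite E; set Q := \prod_(_ <= _ < _ | _) _ in Qpos *; nra.
have hs : \sum_(1 <= m < k.+1) P < \sum_(1 <= m < k.+1) (2 * \prod_(1 <= l < k.+1 | l != m) (alpha l - (-1))).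
  by apply: ltr_sum_nat; [rewrite ltnS (ltnW hk2)|].
rewrite sumr_const_nat subn1 /= -mulr_sumr in hs.
rewrite -mulr_natr in hs.
have h2 : 2 <= (k%:R : R) by rewrite (ler_nat R 2 k).
rewrite /Fk -/P /Sk; set S := \sum_(_ <= _ < _) _ in hs *.
nra.
Qed.

Lemma Pk_a1 (R : comNzRingType) (alpha : nat -> R) k : (1 <= k)%N -> Pk alpha (alpha 1%N) k = 0.
Proof. by move=> hk; rewrite /Pk big_ltn // subrr mul0r. Qed.

Lemma Fa1 (R : rcfType) p (alpha : nat -> R) K : hypA p alpha -> (1 <= K <= p)%N ->
  0 <= Fk alpha (alpha 1%N) K.
Proof.
move=> [hm hb]; elim: K => [//|K IH] /andP [h1 h2].
case: K IH h1 h2 => [|K] IH h1 h2.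
  rewrite Fk_rec Fk0 /Pk big_geq // subrr mul0r add0r mulr1.
  by have [|h _] := hb 1%N; [rewrite /= h2 | exact: ltW h].
rewrite Fk_rec Pk_a1 // mulr0 addr0; apply: mulr_ge0.
  by rewrite subr_ge0; apply: hm.
by apply: IH; rewrite /= ltnW.
Qed.


Lemma ring_aux (T : comNzRingType) (A B G G' X : T) (n' m' : nat) :
  A ^+ n'.+1 * (B ^+ m'.+1 * G) +
  X * - (-1 * A ^+ n' * n'.+1%:R * (B ^+ m'.+1 * G) +
   A ^+ n'.+1 * (-1 * B ^+ m' * m'.+1%:R * G + B ^+ m'.+1 * G')) =
  A ^+ n' * B ^+ m' * (A * B * G + X * (n'.+1%:R * B * G + m'.+1%:R * A * G - A * B * G')).
Proof.
rewrite !exprS; move: (A ^+ n') (B ^+ m') => An Bm; ring.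
Qed.

Lemma interval_root (R : rcfType) p (alpha : nat -> R) k j : hypA p alpha ->
  (1 <= j)%N -> (j < k)%N -> (k <= p)%N -> alpha j < alpha j.+1 ->
  exists x, alpha j < x < alpha j.+1 /\ root (dformula alpha k) x.
Proof.
move=> [hm hb] hj1 hjk hkp hvw.
set v := alpha j in hvw *; set w := alpha j.+1 in hvw *.
set s := index_iota 1 k.+1.
have Ef := prod_split alpha s (fun _ => true) v.
rewrite (prod_split alpha s (fun l => true && (alpha l != v)) w) in Ef.
set n := count _ s in Ef; set m := count _ s in Ef.
set G := \prod_(l <- s | (true && (alpha l != v)) && (alpha l != w)) ((alpha l)%:P - 'X) in Ef.
have hn : (0 < n)%N.
  rewrite /n -has_count; apply/hasP; exists j; last by rewrite /= eqxx.
  by rewrite mem_index_iota hj1 ltnS ltnW.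
have hm0 : (0 < m)%N.
  rewrite /m -has_count; apply/hasP; exists j.+1; last by rewrite /= eqxx andbT gt_eqF.
  by rewrite mem_index_iota; apply/andP; split; [|rewrite ltnS].
move: Ef; rewrite -(prednK hn) -(prednK hm0).
set n' := n.-1; set m' := m.-1 => Ef.
set A := v%:P - 'X; set B := w%:P - 'X.
pose H := A * B * G + 'X * ((n'.+1)%:R * B * G + (m'.+1)%:R * A * G - A * B * G^`()).
have Ed : dformula alpha k = A ^+ n' * B ^+ m' * H.
  rewrite dformula_Fk /Fk Sk_deriv.
  have -> : Pk (fun i => (alpha i)%:P) 'X k = A ^+ n'.+1 * (B ^+ m'.+1 * G) by exact: Ef.
  have dA : A^`() = -1 by rewrite /A derivB derivC derivX sub0r.
  have dB : B^`() = -1 by rewrite /B derivB derivC derivX sub0r.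
  rewrite derivM (derivM (B ^+ m'.+1)) (deriv_exp A) (deriv_exp B) dA dB !succnK.
  rewrite -(mulr_natr _ n'.+1) -(mulr_natr _ m'.+1) /H.
  clearbody A B G; apply: ring_aux.
have Gpos : 0 < G.[v] * G.[w].
  rewrite /G !horner_prod -big_split /= big_seq_cond; apply: prodr_gt0 => l.
  rewrite mem_index_iota /= => /andP [/andP [hl1 hl2] /andP [hlv hlw]].
  rewrite !hornerE.
  have hlp : (l <= p)%N by rewrite (leq_trans _ hkp) // -ltnS.
  case: (leqP l j) => hlj.
    have : alpha l <= v by apply: hm; rewrite ?hl1 ?hlj ?(leq_trans (ltnW hjk) hkp).
    rewrite le_eqVlt (negbTE hlv) /= => hlt; nra.
  have : w <= alpha l by apply: hm.
  rewrite le_eqVlt eq_sym (negbTE hlw) /= => hlt; nra.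
have v0 : 0 < v by have [] := hb j; rewrite ?hj1 ?(leq_trans (ltnW hjk)).
have Hv : H.[v] = v * (n'.+1)%:R * (w - v) * G.[v].
  rewrite /H /A /B -[n'.+1%:R]polyC_natr -[m'.+1%:R]polyC_natr !hornerE; ring.
have Hw : H.[w] = w * (m'.+1)%:R * (v - w) * G.[w].
  rewrite /H /A /B -[n'.+1%:R]polyC_natr -[m'.+1%:R]polyC_natr !hornerE; ring.
have n0 : 0 < ((n'.+1)%:R : R) by rewrite ltr0n.
have m0 : 0 < ((m'.+1)%:R : R) by rewrite ltr0n.
have HH : H.[v] * H.[w] < 0.
  rewrite Hv Hw.
  have -> : v * (n'.+1)%:R * (w - v) * G.[v] * (w * (m'.+1)%:R * (v - w) * G.[w]) =
     - ((v * w) * ((n'.+1)%:R * (m'.+1)%:R) * ((w - v) * (w - v)) * (G.[v] * G.[w])) by ring.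
  rewrite oppr_lt0; apply: mulr_gt0 => //; apply: mulr_gt0; last by rewrite mulr_gt0 // subr_gt0.
  by apply: mulr_gt0; [apply: mulr_gt0 => //; lra | exact: mulr_gt0].
have [x /andP [hx1 hx2] hx] : exists2 x, v <= x <= w & root H x.
  case: (ltrP H.[v] 0) => hv.
    apply: poly_ivt; first exact: ltW.
    rewrite (ltW hv) /=; nra.
  have [x hx1 hx2] : exists2 x, v <= x <= w & root (- H) x.
    apply: poly_ivt; first exact: ltW.
    rewrite !hornerN oppr_le0 hv /= oppr_ge0; nra.
  by exists x => //; move: hx2; rewrite rootN.
exists x; split.
  move: hx; rewrite /root => /eqP hx.
  rewrite !lt_neqAle hx1 hx2 !andbT; apply/andP; split.
    by apply/eqP => E; rewrite -E in hx; move: HH; rewrite hx mul0r ltxx.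
  by apply/eqP => E; rewrite E in hx; move: HH; rewrite hx mulr0 ltxx.
by rewrite /root Ed hornerM (eqP hx) mulr0.
Qed.


Lemma count_le_in (T : eqType) (a1 a2 : pred T) (s : seq T) :
  (forall x, x \in s -> a1 x -> a2 x) -> (count a1 s <= count a2 s)%N.
Proof.
elim: s => [//|x s IH] H /=; apply: leq_add.
  by case h1: (a1 x) => //; rewrite (H x) ?mem_head.
by apply: IH => y hy; apply: H; rewrite in_cons hy orbT.
Qed.

Lemma count_le1 (T : eqType) (a : pred T) (s : seq T) : uniq s ->
  (forall x y, x \in s -> y \in s -> a x -> a y -> x = y) -> (count a s <= 1)%N.
Proof.
elim: s => [//|x s IH] /= /andP [hx hu] H.
case hax: (a x) => /=.
  rewrite add1n ltnS leqn0 eqn0Ngt -has_count; apply/hasPn => y hy; apply/negP => hay.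
  have hy' : y \in x :: s by rewrite in_cons hy orbT.
  have E := H x y (mem_head _ _) hy' hax hay.
  by rewrite E hy in hx.
by apply: IH => // u v hu' hv'; apply: H; rewrite in_cons ?hu' ?hv' orbT.
Qed.

Lemma count_inj (R : eqType) (a : nat -> R) y k m : (1 <= m <= k)%N ->
  (count (fun j => (a j == a j.+1) && (a j == y)) (iota 1 k.-1) <=
   count (fun l => (l != m) && (a l == y)) (index_iota 1 k.+1))%N.
Proof.
move=> /andP [hm1 hmk].
have e1 : iota 1 k.-1 = iota 1 m.-1 ++ iota m (k - m).
  have -> : k.-1 = (m.-1 + (k - m))%N by lia.
  by rewrite iotaD; congr (_ ++ iota _ _); lia.
have e2 : index_iota 1 k.+1 = iota 1 m.-1 ++ m :: iota m.+1 (k - m).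
  rewrite /index_iota subn1 /=.
  have -> : m :: iota m.+1 (k - m) = iota m (k - m).+1 by [].
  have -> : k = (m.-1 + (k - m).+1)%N by lia.
  by rewrite iotaD; congr (_ ++ iota _ _); lia.
rewrite e1 e2 !count_cat /= eqxx /= add0n; apply: leq_add.
  apply: count_le_in => j; rewrite mem_iota => /andP [_ hj] /andP [_ ->].
  rewrite andbT; apply/eqP => E; rewrite E -(prednK hm1) add1n ltnn in hj.
  by [].
have -> : iota m.+1 (k - m) = [seq j.+1 | j <- iota m (k - m)].
  by rewrite -add1n iotaDl.
rewrite count_map; apply: count_le_in => j; rewrite mem_iota => /andP [hj _] /andP [/eqP E1 /eqP E2].
rewrite /= -E1 E2 eqxx andbT; apply/eqP => E; rewrite -E in hj.
by rewrite ltnn in hj.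
Qed.


Definition rho0 (R : rcfType) (alpha : nat -> R) k : R :=
  epsilon (inhabits 0) (fun x => x < 0 /\ root (dformula alpha k) x).
Definition rj (R : rcfType) (alpha : nat -> R) k j : R :=
  if alpha j < alpha j.+1 then
    epsilon (inhabits 0) (fun x => alpha j < x < alpha j.+1 /\ root (dformula alpha k) x)
  else alpha j.
Definition rlist (R : rcfType) (alpha : nat -> R) k : seq R :=
  rho0 alpha k :: [seq rj alpha k j | j <- iota 1 k.-1].

Lemma rho0P (R : rcfType) p (alpha : nat -> R) k : hypA p alpha -> (2 <= k <= p)%N ->
  rho0 alpha k < 0 /\ root (dformula alpha k) (rho0 alpha k).
Proof.
move=> hA hk; rewrite /rho0.
apply: (epsilon_spec (inhabits 0) (fun x => x < 0 /\ root (dformula alpha k) x)).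
have h0 := F0pos hA (proj2 (andP hk)).
have h1 := Fm1neg hA hk.
have [x /andP [hx1 hx2] hx] : exists2 x, -1 <= x <= 0 & root (dformula alpha k) x.
  apply: poly_ivt; first lra.
  by rewrite dformula_Fk !horner_Fk (ltW h1) (ltW h0).
exists x; split => //; rewrite lt_neqAle hx2 andbT; apply/eqP => E.
by move: hx; rewrite /root E dformula_Fk horner_Fk (gt_eqF h0).
Qed.

Lemma rjP (R : rcfType) p (alpha : nat -> R) k j : hypA p alpha -> (k <= p)%N ->
  (1 <= j)%N -> (j < k)%N ->
  [/\ alpha j <= rj alpha k j <= alpha j.+1,
      alpha j < alpha j.+1 -> alpha j < rj alpha k j < alpha j.+1 /\ root (dformula alpha k) (rj alpha k j)
    & ~~ (alpha j < alpha j.+1) -> rj alpha k j = alpha j /\ alpha j = alpha j.+1].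
Proof.
move=> hA hkp hj1 hjk; rewrite /rj.
have hle : alpha j <= alpha j.+1 by apply: (proj1 hA) => //; lia.
case: ifP => hlt.
  have := epsilon_spec (inhabits 0) (fun x => alpha j < x < alpha j.+1 /\ root (dformula alpha k) x)
     (interval_root hA hj1 hjk hkp hlt).
  set x := epsilon _ _ => - [/andP [h1 h2] h3].
  by split => //; [rewrite !ltW | move=> _; rewrite h1 h2].
split => //; first by rewrite lexx hle.
by move=> _; split => //; apply/eqP; rewrite eq_le hle /= leNgt hlt.
Qed.

Lemma rlist_size (R : rcfType) (alpha : nat -> R) k : (1 <= k)%N -> size (rlist alpha k) = k.
Proof. by move=> hk; rewrite /= size_map size_iota prednK. Qed.

Lemma rlist_nth (R : rcfType) (alpha : nat -> R) k j : (1 <= j < k)%N ->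
  nth 0 (rlist alpha k) j = rj alpha k j.
Proof.
case: j => // j /andP [_ hj] /=.
rewrite (nth_map 0%N) ?size_iota ?nth_iota //; lia.
Qed.

Lemma rlist_sorted (R : rcfType) p (alpha : nat -> R) k : hypA p alpha -> (2 <= k <= p)%N ->
  sorted <=%R (rlist alpha k).
Proof.
move=> hA /andP [hk2 hkp]; have [hm hb] := hA.
apply/(sortedP 0) => i; rewrite rlist_size ?(ltnW hk2) // => hi.
have a1 : 0 < alpha 1%N by have [] := hb 1%N; rewrite ?(leq_trans _ hkp) // (ltnW hk2).
case: i hi => [|i] hi.
  rewrite (rlist_nth alpha (j := 1)) ?hk2 //=.
  have [h _ _] := @rjP _ p alpha k 1%N hA hkp (leqnn 1) hk2.
  have [h0 _] := rho0P hA (introT andP (conj hk2 hkp)).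
  move: h => /andP [h h']; apply: ltW; apply: (lt_trans h0); exact: (lt_le_trans a1 h).
rewrite !rlist_nth //; try lia.
have [/andP [_ h1] _ _] := @rjP _ p alpha k i.+1 hA hkp (ltn0Sn i) (ltnW hi).
have [/andP [h2 _] _ _] := @rjP _ p alpha k i.+2 hA hkp (ltn0Sn i.+1) hi.
exact: le_trans h1 h2.
Qed.

Lemma rlist_div (R : rcfType) p (alpha : nat -> R) k y : hypA p alpha -> (2 <= k <= p)%N ->
  ('X - y%:P) ^+ (count_mem y (rlist alpha k)) %| dformula alpha k.
Proof.
move=> hA hk; have [hm hb] := hA; have /andP [hk2 hkp] := hk.
have [r0 r0root] := rho0P hA hk.
have jr : forall j, j \in iota 1 k.-1 -> (1 <= j)%N && (j < k)%N.
  by move=> j; rewrite mem_iota => /andP [h1 h2]; apply/andP; split => //; lia.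
have apos : forall l, (1 <= l <= k)%N -> 0 < alpha l.
  by move=> l /andP [h1 h2]; have [] := hb l; rewrite ?h1 ?(leq_trans h2).
set s := index_iota 1 k.+1.
case: (boolP (has (fun l => alpha l == y) s)) => [/hasP [m hms /eqP hmy] | hno].
  have hm1 : (1 <= m <= k)%N by move: hms; rewrite mem_index_iota ltnS.
  set c := count (fun j => (alpha j == alpha j.+1) && (alpha j == y)) (iota 1 k.-1).
  have hc : (count_mem y (rlist alpha k) <= c)%N.
    rewrite /rlist /=.
    have -> : (rho0 alpha k == y) = false.
      by apply/negbTE; rewrite lt_eqF // -hmy (lt_trans r0 (apos m hm1)).
    rewrite add0n count_map; apply: count_le_in => j /jr /andP [hj1 hjk] /= /eqP hrj.
    have [_ H2 H3] := @rjP _ p alpha k j hA hkp hj1 hjk.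
    case: (boolP (alpha j < alpha j.+1)) => hlt.
      have [/andP [h1 h2] _] := H2 hlt; exfalso.
      rewrite hrj -hmy in h1 h2.
      case: (leqP m j) => hmj.
        have : alpha m <= alpha j by apply: hm; lia.
        by rewrite leNgt h1.
      have : alpha j.+1 <= alpha m by apply: hm; lia.
      by rewrite leNgt h2.
    have [E1 E2] := H3 hlt.
    by rewrite -E2 eqxx /= -E1 hrj.
  apply: dvdp_trans (dvdp_exp2l _ hc) _.
  rewrite dformula_Fk /Fk; apply: dvdp_add.
    apply: dvdp_trans (dvdp_exp2l _ _) (dvd_prod alpha s (fun _ => true) y).
    apply: (leq_trans (count_inj alpha y hm1)); apply: sub_count => l /andP [_ ->] //.
  apply: dvdp_mull; rewrite /Sk big_seq; apply: (big_ind (fun q => _ %| q)).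
  - exact: dvdp0.
  - by move=> x1 x2 h1 h2; apply: dvdp_add.
  move=> m' hm'; apply: dvdp_trans (dvdp_exp2l _ _) (dvd_prod alpha s (fun l => l != m') y).
  by apply: count_inj; move: hm'; rewrite mem_index_iota ltnS.
have hnot : forall l, (1 <= l <= k)%N -> alpha l != y.
  move=> l hl; apply: contraNneq hno => E; apply/hasP; exists l; last by rewrite E.
  by rewrite mem_index_iota ltnS.
have rjroot : forall j, (1 <= j)%N -> (j < k)%N -> rj alpha k j = y ->
    alpha j < y < alpha j.+1 /\ root (dformula alpha k) y.
  move=> j hj1 hjk hrj.
  have [_ H2 H3] := @rjP _ p alpha k j hA hkp hj1 hjk.
  case: (boolP (alpha j < alpha j.+1)) => hlt; first by rewrite -hrj; apply: H2.
  have [E1 _] := H3 hlt; exfalso; move: (hnot j); rewrite -hrj E1 eqxx.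
  by move/(_ (introT andP (conj hj1 (ltnW hjk)))).
have hc : (count_mem y (rlist alpha k) <= 1)%N.
  rewrite /rlist /= count_map.
  pose Q := fun j => (alpha j < y) && (y < alpha j.+1).
  have hQ : (count (fun j => rj alpha k j == y) (iota 1 k.-1) <=
             count Q (iota 1 k.-1))%N.
    apply: count_le_in => j /jr /andP [hj1 hjk] /eqP hrj.
    by have [/andP [h1 h2] _] := rjroot j hj1 hjk hrj; rewrite /Q h1 h2.
  have hQ1 : (count Q (iota 1 k.-1) <= 1)%N.
    apply: count_le1; first exact: iota_uniq.
    have key : forall i j, i \in iota 1 k.-1 -> j \in iota 1 k.-1 -> (i < j)%N ->
        Q i -> Q j -> False.
      move=> i j /jr /andP [hi1 hik] /jr /andP [hj1 hjk] hij /andP [_ h1] /andP [h2 _].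
      have : alpha i.+1 <= alpha j by apply: hm; lia.
      by rewrite leNgt (lt_trans h2 h1).
    move=> i j hi hj qi qj; case: (ltngtP i j) => // hij; exfalso.
      exact: (key i j).
    exact: (key j i).
  case: (rho0 alpha k =P y) => [E|_] /=; last by rewrite add0n (leq_trans hQ).
  suff -> : count (fun j => rj alpha k j == y) (iota 1 k.-1) = 0%N by [].
  apply/eqP; rewrite eqn0Ngt -has_count; apply/hasPn => j /jr /andP [hj1 hjk].
  apply/negP => /eqP hrj; have [/andP [h1 _] _] := rjroot j hj1 hjk hrj.
  have := apos j (introT andP (conj hj1 (ltnW hjk))); rewrite -E in h1.
  by move: r0 => r0 h0; have := lt_trans h1 r0; rewrite ltNge (ltW h0).
case: (posnP (count_mem y (rlist alpha k))) => [->|hpos]; first by rewrite expr0 dvd1p.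
have -> : count_mem y (rlist alpha k) = 1%N by apply/eqP; rewrite eqn_leq hc hpos.
rewrite expr1 dvdp_XsubCl.
have : y \in rlist alpha k by rewrite -has_pred1 has_count.
rewrite /rlist in_cons => /orP [/eqP E|/mapP [j /jr /andP [hj1 hjk] E]].
  by rewrite E.
by have [] := rjroot j hj1 hjk (esym E).
Qed.


Lemma rlist_fact (R : rcfType) p (alpha : nat -> R) k : hypA p alpha -> (2 <= k <= p)%N ->
  dformula alpha k = lead_coef (dformula alpha k) *: \prod_(x <- rlist alpha k) ('X - x%:P).
Proof.
move=> hA hk; have /andP [hk2 hkp] := hk.
apply: factor_from_div; first by apply: prod_divides => y; apply: (rlist_div _ hA hk).
by rewrite size_dformula // rlist_size // ltnW.
Qed.

Lemma dformula_neq0 (R : rcfType) (alpha : nat -> R) k : (2 <= k)%N -> dformula alpha k != 0.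
Proof. by move=> hk; rewrite -size_poly_eq0 size_dformula. Qed.

Lemma rlist_rootE (R : rcfType) p (alpha : nat -> R) k x : hypA p alpha -> (2 <= k <= p)%N ->
  root (dformula alpha k) x = (x \in rlist alpha k).
Proof.
move=> hA hk; have /andP [hk2 hkp] := hk.
rewrite [in LHS](rlist_fact hA hk) rootZ ?root_prod_XsubC //.
by rewrite lead_coef_eq0 dformula_neq0.
Qed.

Lemma dform_rec_eval (R : rcfType) (alpha : nat -> R) k x :
  (dformula alpha k.+1).[x] = (alpha k.+1 - x) * (dformula alpha k).[x] + x * Pk alpha x k.
Proof. by rewrite !dformula_Fk !horner_Fk Fk_rec. Qed.

Lemma hypA_of (R : rcfType) p (alpha : nat -> R) :
  0 < alpha 1%N -> (forall i : nat, (1 <= i < p)%N -> alpha i <= alpha i.+1) ->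
  alpha p < 1 -> hypA p alpha.
Proof.
move=> a1 hs hp.
have hm : forall i j, (1 <= i)%N -> (i <= j)%N -> (j <= p)%N -> alpha i <= alpha j.
  move=> i j hi; elim: j => [|j IH] hij hjp; first by move: hi; rewrite leqn0 in hij; rewrite (eqP hij).
  case: (i =P j.+1) => [->|/eqP hne]; first exact: lexx.
  have hij' : (i <= j)%N by lia.
  apply: (le_trans (IH hij' (ltnW hjp))); apply: hs; lia.
split => // i /andP [hi hip]; split.
  by apply: (lt_le_trans a1); apply: hm.
by apply: (le_lt_trans _ hp); apply: hm.
Qed.


Lemma Fk2 (R : comNzRingType) (alpha : nat -> R) x :
  Fk alpha x 2 = alpha 1%N * alpha 2%N - x ^+ 2.
Proof.
rewrite !Fk_rec Fk0 Pk_rec /Pk big_geq //; ring.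
Qed.

Lemma sqrt_root (R : rcfType) (a b x : R) : a * b - x ^+ 2 = 0 -> Num.sqrt (a * b) = `|x|.
Proof. by move=> /eqP; rewrite subr_eq0 => /eqP ->; rewrite sqrtr_sqr. Qed.

Lemma rj_pos (R : rcfType) p (alpha : nat -> R) k j : hypA p alpha -> (k <= p)%N ->
  (1 <= j)%N -> (j < k)%N -> 0 < rj alpha k j.
Proof.
move=> hA hkp hj1 hjk; have [h _ _] := @rjP _ p alpha k j hA hkp hj1 hjk.
have [_ hb] := hA; have [a0 _] := hb j (introT andP (conj hj1 (leq_trans (ltnW hjk) hkp))).
by move: h => /andP [h _]; apply: lt_le_trans h.
Qed.

Theorem lemma1 (R : rcfType) (p : nat) (alpha : nat -> R) :
  (2 <= p)%N ->
  (forall (k : nat) (hk : (k <= p)%N), (1 <= k)%N ->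
     dpoly alpha hk = dformula alpha k /\
     (forall c : R, (dpoly alpha hk).[c] = lead_minor (Bmat p alpha c) hk)) /\
  (forall (k : nat) (hk : (k <= p)%N), (2 <= k)%N ->
     size (dpoly alpha hk) = k.+1) /\
  (0 < alpha 1%N ->
   (forall i : nat, (1 <= i < p)%N -> alpha i <= alpha i.+1) ->
   alpha p < 1 ->
   exists r : nat -> seq R,
     (forall (k : nat) (hk : (k <= p)%N), (2 <= k)%N ->
        [/\ size (r k) = k,
            sorted <=%R (r k),
            dpoly alpha hk = lead_coef (dpoly alpha hk) *: \prod_(x <- r k) ('X - x%:P),
            nth 0 (r k) 0 < 0 &
            (forall j : nat, (1 <= j < k)%N ->
               alpha j <= nth 0 (r k) j /\ nth 0 (r k) j <= alpha j.+1)]) /\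
     nth 0 (r 2%N) 0 = - Num.sqrt (alpha 1%N * alpha 2%N) /\
     nth 0 (r 2%N) 1 = Num.sqrt (alpha 1%N * alpha 2%N) /\
     (forall k : nat, (2 <= k < p)%N ->
        nth 0 (r k) 0 <= nth 0 (r k.+1) 0 /\ nth 0 (r k.+1) 1 <= nth 0 (r k) 1) /\
     (forall k : nat, (2 <= k <= p)%N -> 0 < nth 0 (r k) 1)).
Proof.
move=> hp; split.
  by move=> k hk _; split; [exact: dpoly_eq | exact: dpoly_horner].
split.
  by move=> k hk h2; rewrite dpoly_eq size_dformula.
move=> a1 hs hp1; have hA := hypA_of a1 hs hp1; have [hm hb] := hA.
exists (rlist alpha); split.
  move=> k hkp hk2; have hk : (2 <= k <= p)%N by rewrite hk2 hkp.
  split.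
  - by rewrite rlist_size // ltnW.
  - exact: rlist_sorted hA hk.
  - rewrite dpoly_eq; exact: rlist_fact hA hk.
  - by have [] := rho0P hA hk.
  move=> j hj; rewrite rlist_nth //; have /andP [hj1 hjk] := hj.
  by have [/andP [h1 h2] _ _] := @rjP _ p alpha k j hA hkp hj1 hjk.
have h2p : (2 <= 2 <= p)%N by rewrite leqnn hp.
have root2 : forall x, x \in rlist alpha 2 -> alpha 1%N * alpha 2%N - x ^+ 2 = 0.
  move=> x hx; rewrite -(rlist_rootE x hA h2p) in hx.
  by move: hx; rewrite /root dformula_Fk horner_Fk Fk2 => /eqP.
split.
  have [r0 _] := rho0P hA h2p.
  by rewrite /= (sqrt_root (root2 _ (mem_head _ _))) ltr0_norm // opprK.
split.
  have hin : rj alpha 2 1 \in rlist alpha 2 by rewrite /= in_cons mem_head orbT.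
  have hpos := @rj_pos _ p alpha 2 1 hA hp (leqnn 1) (ltnSn 1).
  by rewrite (sqrt_root (root2 _ hin)) /= gtr0_norm.
split; last first.
  move=> k /andP [hk2 hkp]; rewrite rlist_nth ?(ltnW hk2) //.
  exact: (@rj_pos _ p alpha k 1 hA hkp (leqnn 1) hk2).
move=> k /andP [hk2 hkp].
have hk : (2 <= k <= p)%N by rewrite hk2 ltnW.
have hk' : (2 <= k.+1 <= p)%N by rewrite hkp ltnW.
have hmem : forall y, 0 < y -> y \in rlist alpha k.+1 -> exists2 j, (1 <= j < k.+1)%N & y = rj alpha k.+1 j.
  move=> y y0; rewrite in_cons => /orP [/eqP E|/mapP [j hj E]].
    by have [r0 _] := rho0P hA hk'; rewrite -E in r0; move: (lt_trans y0 r0); rewrite ltxx.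
  by exists j => //; move: hj; rewrite mem_iota; lia.
split.
  have [r0 rr] := rho0P hA hk.
  have Ppos : 0 < Pk alpha (rho0 alpha k) k.
    rewrite /Pk big_seq; apply: prodr_gt0 => l; rewrite mem_index_iota => hl.
    have [al _] : 0 < alpha l /\ alpha l < 1 by apply: hb; lia.
    lra.
  have dneg : (dformula alpha k.+1).[rho0 alpha k] < 0.
    rewrite dform_rec_eval (rootP rr) mulr0 add0r; nra.
  have d0 : 0 < (dformula alpha k.+1).[0].
    by rewrite dformula_Fk horner_Fk; apply: (F0pos hA).
  have [y /andP [hy1 hy2] hy] : exists2 y, rho0 alpha k <= y <= 0 & root (dformula alpha k.+1) y.
    by apply: poly_ivt; [exact: ltW | rewrite (ltW dneg) (ltW d0)].
  have yneg : y < 0.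
    rewrite lt_neqAle hy2 andbT; apply/eqP => E; move: hy; rewrite E /root.
    by rewrite (gt_eqF d0).
  rewrite (rlist_rootE y hA hk') in_cons in hy.
  case/orP: hy => [/eqP E|/mapP [j hj E]]; first by rewrite /= -E.
  exfalso; have hj' : (1 <= j)%N && (j < k.+1)%N by move: hj; rewrite mem_iota; lia.
  have := @rj_pos _ p alpha k.+1 j hA hkp (proj1 (andP hj')) (proj2 (andP hj')).
  by rewrite -E ltNge (ltW yneg).
set x := nth 0 (rlist alpha k) 1.
have hx : x = rj alpha k 1 by rewrite /x rlist_nth // (ltnW hk2).
have [/andP [hx1 hx2] _ _] := @rjP _ p alpha k 1 hA (ltnW hkp) (leqnn 1) hk2.
rewrite -hx in hx1 hx2.
have xroot : root (dformula alpha k) x.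
  by rewrite (rlist_rootE x hA hk) /x mem_nth // rlist_size // ltnW.
have Pneg : Pk alpha x k <= 0.
  rewrite /Pk big_ltn; last lia.
  apply: mulr_le0_ge0; first by rewrite subr_le0.
  rewrite big_seq; apply: prodr_ge0 => l; rewrite mem_index_iota => /andP [hl1 hl2].
  rewrite subr_ge0; apply: (le_trans hx2); apply: hm => //; lia.
have dx : (dformula alpha k.+1).[x] <= 0.
  rewrite dform_rec_eval (rootP xroot) mulr0 add0r.
  by apply: mulr_ge0_le0; [exact: (le_trans (ltW a1) hx1) | exact: Pneg].
have da1 : 0 <= (dformula alpha k.+1).[alpha 1%N].
  by rewrite dformula_Fk horner_Fk; apply: (Fa1 hA); lia.
have [y /andP [hy1 hy2] hy] : exists2 y, alpha 1%N <= y <= x & root (- dformula alpha k.+1) y.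
  by apply: poly_ivt => //; rewrite !hornerN oppr_le0 da1 oppr_ge0 dx.
rewrite rootN (rlist_rootE y hA hk') in hy.
have [j hj E] := hmem y (lt_le_trans a1 hy1) hy.
apply: (@le_trans _ _ y) => //; rewrite E -(rlist_nth alpha hj).
have hs' := rlist_sorted hA hk'.
apply: (sorted_leq_nth le_trans lexx 0 hs'); rewrite ?inE ?rlist_size //; try lia.
Qed.
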